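(* For every $\alpha<1.5$ there exist reals $0<v_1<\dots<v_n$ and a distribution $\mathcal{D}$ on $\{v_1,\dots,v_n\}$ with full support such that no signaling scheme for $\mathcal{D}$ is $\alpha$-majorized.
   Context: Values and prior. $v_0:=0$, $f_{\mathcal{D}}$ is the mass function of $\mathcal{D}$, $F_{\mathcal{D}}$ its CDF, and $G_S(p)=\Pr_{v\sim S}[v\ge p]$. Signals and pricing. A signal is a distribution $S$ on $\{v_1,\dots,v_n\}$. The seller posts $p^*_S$, the smallest $v$ in the support of $S$ maximizing $v\,G_S(v)$. The surplus of value $v$ is $cs_v(S)=\mathbb{1}[v\ge p^*_S](v-p^*_S)$. Signaling schemes. A signaling scheme is $\mathcal{Z}=\{(S_q,\gamma_q)\}$ with $\gamma_q\ge0$, $\sum\gamma_q=1$ and $\sum_q\gamma_q f_{S_q}=f_{\mathcal{D}}$. Its expected consumer surplus at $v_i$ is $cs_{v_i}(\mathcal{Z})=\sum_q cs_{v_i}(S_q)\gamma_q f_{S_q}(v_i)/f_{\mathcal{D}}(v_i)$. Majorization. The surplus-mass function $s_{\mathcal{Z}}$ on $(0,1]$ equals $cs_{v_i}(\mathcal{Z})$ on $(F_{\mathcal{D}}(v_{i-1}),F_{\mathcal{D}}(v_i)]$. For a finite step function $f$ on $(0,1]$, $\mathrm{Pf}(f,m)=\int_0^m f_{\mathrm{sorted}}$, where $f_{\mathrm{sorted}}$ rearranges the steps of $f$ in ascending order. $\mathcal{Z}$ is $\alpha$-majorized if $\alpha\,\mathrm{Pf}(s_{\mathcal{Z}},m)\ge\mathrm{Pf}(s_{\mathcal{Z}'},m)$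 for every signaling scheme $\mathcal{Z}'$ for $\mathcal{D}$ and every $m\in(0,1]$. *)

(* Defs.v *)
From HB Require Import structures.
From mathcomp Require Import all_boot all_order all_algebra.
From mathcomp Require Import reals.
Set Implicit Arguments. Unset Strict Implicit. Unset Printing Implicit Defensive.
Import Order.TTheory GRing.Theory Num.Theory.
Local Open Scope ring_scope.

Section SignalDefs.
Variable R : realType.
Variable n : nat.
Variable v : 'I_n -> R.

(* G_S(p) = Pr_{v ~ S}[v >= p]; a signal S is a mass function on the values *)
Definition tailG (S : 'I_n -> R) (p : R) : R := \sum_(j < n | p <= v j) S j.

Definition revenue (S : 'I_n -> R) (i : 'I_n) : R := v i * tailG S (v i).

Definition price_idx (S : 'I_n -> R) : option 'I_n :=
  [pick i | [&& 0 < S i,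
              [forall k, (0 < S k) ==> (revenue S k <= revenue S i)] &
              [forall k, ((0 < S k) && (revenue S k == revenue S i)) ==> (v i <= v k)]]].

Definition price (S : 'I_n -> R) : R :=
  if price_idx S is Some i then v i else 0.

Definition cs (S : 'I_n -> R) (i : 'I_n) : R :=
  if price S <= v i then v i - price S else 0.

Definition is_distribution (g : 'I_n -> R) : Prop :=
  (forall i, 0 <= g i) /\ \sum_(i < n) g i = 1.

Definition signaling_scheme (f : 'I_n -> R) (m : nat)
  (gamma : 'I_m -> R) (S : 'I_m -> 'I_n -> R) : Prop :=
  [/\ forall q, 0 <= gamma q,
      \sum_(q < m) gamma q = 1,
      forall q, is_distribution (S q) &
      forall i, \sum_(q < m) gamma q * S q i = f i].

Definition cs_scheme (f : 'I_n -> R) (m : nat)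
  (gamma : 'I_m -> R) (S : 'I_m -> 'I_n -> R) (i : 'I_n) : R :=
  \sum_(q < m) cs (S q) i * gamma q * S q i / f i.

(* The surplus-mass function as the list of its steps (value, width):
   on (F(v_{i-1}), F(v_i)] it takes value cs_{v_i}(Z); the width is f(v_i). *)
Definition surplus_steps (f : 'I_n -> R) (m : nat)
  (gamma : 'I_m -> R) (S : 'I_m -> 'I_n -> R) : seq (R * R) :=
  [seq (cs_scheme f gamma S i, f i) | i <- enum 'I_n].

End SignalDefs.

(* Integral over (0, x] of the step function whose consecutive steps
   (starting at 0) have the given (value, width). *)
Fixpoint step_integral (R : realType) (l : seq (R * R)) (x : R) : R :=
  match l with
  | [::] => 0
  | (c, w) :: l' => c * Num.min w (Num.max x 0) + step_integral l' (x - w)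
  end.

Definition sort_steps (R : realType) (l : seq (R * R)) : seq (R * R) :=
  sort (fun a b : R * R => a.1 <= b.1) l.

Definition Pf (R : realType) (l : seq (R * R)) (x : R) : R :=
  step_integral (sort_steps l) x.

Definition alpha_majorized (R : realType) (n : nat) (v : 'I_n -> R)
  (f : 'I_n -> R) (m : nat) (gamma : 'I_m -> R) (S : 'I_m -> 'I_n -> R)
  (alpha : R) : Prop :=
  forall (m' : nat) (gamma' : 'I_m' -> R) (S' : 'I_m' -> 'I_n -> R),
    signaling_scheme f gamma' S' ->
    forall x : R, 0 < x -> x <= 1 ->
      Pf (surplus_steps v f gamma' S') x <= alpha * Pf (surplus_steps v f gamma S) x.

(* Main.v *)
Require Import Defs.
From HB Require Import structures.
From mathcomp Require Import all_boot all_order all_algebra.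
From mathcomp Require Import reals.
From mathcomp Require Import ring lra.
Import Order.TTheory GRing.Theory Num.Theory.
Local Open Scope ring_scope.

Ltac decide_ifs := repeat match goal with
 | |- context [if ?a < ?b then _ else _] =>
   (have ->: (a < b) = true by apply/idP; lra) ||
   (have ->: (a < b) = false by apply/negbTE; rewrite -leNgt; lra)
 end.

Definition i0 : 'I_3 := @Ordinal 3 0 isT.
Definition i1 : 'I_3 := @Ordinal 3 1 isT.
Definition i2 : 'I_3 := @Ordinal 3 2 isT.

Lemma ord3 (j : 'I_3) : j = i0 \/ j = i1 \/ j = i2.
Proof. case: j => [[|[|[|j]]] Hj]; [left|right;left|right;right|by []]; exact/val_inj. Qed.

Ltac cases3 x := case: (ord3 x) => [->|[->|->]].

Section Aux.
Variable R : realType.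

Lemma price_exists (n : nat) (v : 'I_n -> R) (S : 'I_n -> R) :
  is_distribution S ->
  exists k, [/\ 0 < S k, (forall j, 0 < S j -> revenue v S j <= revenue v S k) &
     price v S = v k].
Proof.
case=> S0 S1.
have [i Si] : exists i, 0 < S i.
  case: (pickP (fun i => 0 < S i)) => [i Si|H]; first by exists i.
  move: S1; rewrite big1 => [|i _]; first by move/eqP; rewrite eq_sym oner_eq0.
  by apply/le_anti; rewrite S0 andbT leNgt H.
case: (@arg_maxP _ _ _ i (fun j => 0 < S j) (fun j => revenue v S j) Si) => k Sk Hk.
pose Q := fun j => (0 < S j) && (revenue v S j == revenue v S k).
have Qk : Q k by rewrite /Q Sk eqxx.
case: (@arg_minP _ _ _ k Q (fun j => v j) Qk) => l /andP[Sl /eqP El] Hl.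
have predl : [&& 0 < S l,
              [forall k, (0 < S k) ==> (revenue v S k <= revenue v S l)] &
              [forall k, ((0 < S k) && (revenue v S k == revenue v S l)) ==> (v l <= v k)]].
  rewrite Sl /=; apply/andP; split; apply/forallP => j; apply/implyP.
    by move=> Sj; rewrite El; apply: Hk.
  by move=> /andP[Sj /eqP Ej]; apply: Hl; rewrite /Q Sj Ej El eqxx.
rewrite /price /price_idx; case: pickP => [i' /and3P[Hi1 /forallP Hi2 _] | H].
  by exists i'; split => // j Sj; move/implyP: (Hi2 j); apply.
by move: (H l); rewrite predl.
Qed.

Lemma price_eq (n : nat) (v : 'I_n -> R) (S : 'I_n -> R) k :
  0 < S k -> (forall j, 0 < S j -> revenue v S j <= revenue v S k) ->
  (forall j, 0 < S j -> revenue v S j = revenue v S k -> v k <= v j) ->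
  price v S = v k.
Proof.
move=> Sk Hk Ht.
rewrite /price /price_idx; case: pickP => [i /and3P[Hi1 /forallP Hi2 /forallP Hi3] | H].
  have e1 : revenue v S k <= revenue v S i by move/implyP: (Hi2 k); apply.
  have e2 := Hk i Hi1.
  have E : revenue v S i = revenue v S k by apply/le_anti; rewrite e1 e2.
  apply/le_anti; rewrite (Ht i Hi1 E) andbT.
  by move/implyP: (Hi3 k); apply; rewrite Sk E eqxx.
have := H k; rewrite Sk /=.
have -> : [forall k0, (0 < S k0) ==> (revenue v S k0 <= revenue v S k)].
  by apply/forallP => j; apply/implyP; apply: Hk.
have -> // : [forall k0, ((0 < S k0) && (revenue v S k0 == revenue v S k)) ==> (v k <= v k0)].
by apply/forallP => j; apply/implyP => /andP[Sj /eqP Ej]; apply: Ht.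
Qed.

Lemma sum3 (F : 'I_3 -> R) : \sum_(j < 3) F j = F i0 + F i1 + F i2.
Proof.
rewrite !big_ord_recl big_ord0 addr0 addrA.
by congr (_ + _ + _); congr F; apply/val_inj.
Qed.

Lemma steps3 (F G : 'I_3 -> R) :
  [seq (F i, G i) | i <- enum 'I_3] = [:: (F i0, G i0); (F i1, G i1); (F i2, G i2)].
Proof.
rewrite !enum_ordSl enum_ord0 /=.
by congr [:: (F _, G _); (F _, G _); (F _, G _)]; apply/val_inj.
Qed.

Definition v3 (i : 'I_3) : R := nth 0 [:: 20; 21; 27] i.
Definition f3 (i : 'I_3) : R := nth 0 [:: 1/100; 19/100; 4/5] i.

Lemma rev0 S : revenue v3 S i0 = 20 * (S i0 + S i1 + S i2).
Proof. by rewrite /revenue /tailG big_mkcond sum3 /v3 /= !ler_nat /=. Qed.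
Lemma rev1 S : revenue v3 S i1 = 21 * (S i1 + S i2).
Proof. by rewrite /revenue /tailG big_mkcond sum3 /v3 /= !ler_nat /= add0r. Qed.
Lemma rev2 S : revenue v3 S i2 = 27 * S i2.
Proof. by rewrite /revenue /tailG big_mkcond sum3 /v3 /= !ler_nat /= !add0r. Qed.


Lemma pos_or_zero (x : R) : 0 <= x -> x = 0 \/ 0 < x.
Proof. by rewrite le_eqVlt => /orP[/eqP<-|]; [left|right]. Qed.

Lemma cert3 S : is_distribution S ->
  [/\ cs v3 S i0 = 0, (forall i, 0 <= cs v3 S i) &
   S i0 * cs v3 S i0 + 28 * (S i1 * cs v3 S i1) + S i2 * cs v3 S i2
     <= 140 * S i0 + 21 * S i1].
Proof.
move=> hd; have [k [Sk Hk Hp]] := @price_exists 3 v3 S hd.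
case: (hd) => S0 _.
have csE i : cs v3 S i = if v3 k <= v3 i then v3 i - v3 k else 0 by rewrite /cs Hp.
have nn i : 0 <= cs v3 S i.
  by rewrite csE; case: ifP => h //; rewrite subr_ge0.
have R0 := rev0 S; have R1 := rev1 S; have R2 := rev2 S.
have P0 := S0 i0; have P1 := S0 i1; have P2 := S0 i2.
split => //.
- rewrite csE; case: (ord3 k) => [->|[->|->]]; rewrite /v3 /= !ler_nat /=; lra.
case: (ord3 k) => Ek; [|case: Ek => Ek]; subst k; rewrite !csE /v3 /= !ler_nat /=.
- case: (pos_or_zero _ P1) => h1.
    case: (pos_or_zero _ P2) => h2; first lra.
    have := Hk i2 h2; rewrite R0 R2; lra.
  have := Hk i1 h1; rewrite R0 R1; lra.
- case: (pos_or_zero _ P2) => h2; first lra.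
  have := Hk i2 h2; rewrite R1 R2; lra.
- lra.
Qed.

Definition Aq m (gamma : 'I_m -> R) (S : 'I_m -> 'I_3 -> R) (i : 'I_3) :=
  \sum_(q < m) gamma q * (S q i * cs v3 (S q) i).
Arguments Aq {m}.

Lemma bound_any m (gamma : 'I_m -> R) S : signaling_scheme f3 gamma S ->
  [/\ forall i, cs_scheme v3 f3 gamma S i = Aq gamma S i / f3 i,
      Aq gamma S i0 = 0, 0 <= Aq gamma S i1, 0 <= Aq gamma S i2 &
      Aq gamma S i0 + 28 * Aq gamma S i1 + Aq gamma S i2 <= 140 * f3 i0 + 21 * f3 i1].
Proof.
case=> G0 G1 Sd Sf.
split.
- move=> i; rewrite /cs_scheme /Aq mulr_suml; apply: eq_bigr => q _.
  ring.
- rewrite /Aq big1 // => q _; have [-> _ _] := cert3 _ (Sd q); by rewrite !mulr0.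
- rewrite /Aq; apply: sumr_ge0 => q _; apply: mulr_ge0 => //; apply: mulr_ge0.
    by case: (Sd q).
  by have [_ h _] := cert3 _ (Sd q).
- rewrite /Aq; apply: sumr_ge0 => q _; apply: mulr_ge0 => //; apply: mulr_ge0.
    by case: (Sd q).
  by have [_ h _] := cert3 _ (Sd q).
have -> : Aq gamma S i0 + 28 * Aq gamma S i1 + Aq gamma S i2 =
  \sum_(q < m) gamma q * (S q i0 * cs v3 (S q) i0 + 28 * (S q i1 * cs v3 (S q) i1)
       + S q i2 * cs v3 (S q) i2).
  rewrite /Aq mulr_sumr -!big_split /=; apply: eq_bigr => q _; ring.
have -> : 140 * f3 i0 + 21 * f3 i1 = \sum_(q < m) gamma q * (140 * S q i0 + 21 * S q i1).
  rewrite -Sf -Sf !mulr_sumr -big_split /=; apply: eq_bigr => q _; ring.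
apply: ler_sum => q _; apply: ler_wpM2l => //.
by have [_ _ h] := cert3 _ (Sd q).
Qed.


Lemma pfA (c1 c2 : R) : 0 <= c1 -> 0 <= c2 ->
  Pf [:: (0, 1/100); (c1, 19/100); (c2, 4/5)] 1 = c1 * (19/100) + c2 * (4/5).
Proof.
move=> h1 h2. rewrite /Pf /sort_steps /sort /= h1 /= ?h2 /=.
case: ifP => h /=; rewrite /Num.min /Num.max /Order.min /Order.max; decide_ifs; lra.
Qed.

Lemma pfB (c1 c2 : R) : 0 <= c1 -> 0 <= c2 ->
  Pf [:: (0, 1/100); (c1, 19/100); (c2, 4/5)] (1/5) <= c1 * (19/100) /\
  (c1 <= c2 -> Pf [:: (0, 1/100); (c1, 19/100); (c2, 4/5)] (1/5) = c1 * (19/100)).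
Proof.
move=> h1 h2. rewrite /Pf /sort_steps /sort /= h1 /= ?h2 /=.
case: ifP => h /=; rewrite /Num.min /Num.max /Order.min /Order.max; decide_ifs;
  split; try move=> ?; try lra.
Qed.

Definition gam1 (q : 'I_3) : R := nth 0 [:: 21/100; 13/100; 66/100] q.
Definition S1 (q : 'I_3) (i : 'I_3) : R :=
  nth 0 (nth [::] [:: [:: 1/21; 16/21; 4/21]; [:: 0; 3/13; 10/13]; [:: 0; 0; 1]] q) i.
Definition gam2 (q : 'I_3) : R := nth 0 [:: 21/100; 63/100; 16/100] q.
Definition S2 (q : 'I_3) (i : 'I_3) : R :=
  nth 0 (nth [::] [:: [:: 1/21; 5/21; 15/21]; [:: 0; 2/9; 7/9]; [:: 0; 0; 1]] q) i.


Lemma scheme1 : signaling_scheme f3 gam1 S1.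
Proof.
split.
- move=> q; cases3 q; rewrite /gam1 /=; lra.
- rewrite sum3 /gam1 /=; lra.
- move=> q; split.
    move=> i; cases3 q; cases3 i; rewrite /S1 /=; lra.
  rewrite sum3; cases3 q; rewrite /S1 /=; lra.
- move=> i; rewrite sum3; cases3 i; rewrite /gam1 /S1 /f3 /=; lra.
Qed.

Lemma scheme2 : signaling_scheme f3 gam2 S2.
Proof.
split.
- move=> q; cases3 q; rewrite /gam2 /=; lra.
- rewrite sum3 /gam2 /=; lra.
- move=> q; split.
    move=> i; cases3 q; cases3 i; rewrite /S2 /=; lra.
  rewrite sum3; cases3 q; rewrite /S2 /=; lra.
- move=> i; rewrite sum3; cases3 i; rewrite /gam2 /S2 /f3 /=; lra.
Qed.

Ltac price_tac k SS :=
  apply: (@price_eq 3 v3 _ k);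
  [ rewrite /SS /=; lra
  | let j := fresh "j" in intro j; cases3 j; rewrite ?rev0 ?rev1 ?rev2 /SS /v3 /= => *; lra
  | let j := fresh "j" in intro j; cases3 j; rewrite ?rev0 ?rev1 ?rev2 /SS /v3 /= => *; lra ].

Lemma cZ1 : [/\ cs_scheme v3 f3 gam1 S1 i0 = 0, cs_scheme v3 f3 gam1 S1 i1 = 16/19
   & cs_scheme v3 f3 gam1 S1 i2 = 11/10].
Proof.
have p0 : price v3 (S1 i0) = v3 i0 by price_tac i0 S1.
have p1 : price v3 (S1 i1) = v3 i1 by price_tac i1 S1.
have p2 : price v3 (S1 i2) = v3 i2 by price_tac i2 S1.
rewrite /cs_scheme !sum3 /cs p0 p1 p2 /v3 /gam1 /S1 /f3 /= !ler_nat /=.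
split; lra.
Qed.

Lemma cZ2 : [/\ cs_scheme v3 f3 gam2 S2 i0 = 0, cs_scheme v3 f3 gam2 S2 i1 = 5/19
   & cs_scheme v3 f3 gam2 S2 i2 = 399/80].
Proof.
have p0 : price v3 (S2 i0) = v3 i0 by price_tac i0 S2.
have p1 : price v3 (S2 i1) = v3 i1 by price_tac i1 S2.
have p2 : price v3 (S2 i2) = v3 i2 by price_tac i2 S2.
rewrite /cs_scheme !sum3 /cs p0 p1 p2 /v3 /gam2 /S2 /f3 /= !ler_nat /=.
split; lra.
Qed.

End Aux.

Theorem theorem4 (R : realType) (alpha : R) :
  alpha < 3 / 2 ->
  exists (n : nat) (v : 'I_n -> R) (f : 'I_n -> R),
    [/\ (forall i, 0 < v i),
        (forall i j : 'I_n, (i < j)%N -> v i < v j),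
        (forall i, 0 < f i),
        \sum_(i < n) f i = 1 &
        forall (m : nat) (gamma : 'I_m -> R) (S : 'I_m -> 'I_n -> R),
          signaling_scheme f gamma S -> ~ alpha_majorized v f gamma S alpha].
Proof.
move=> ha; exists 3, (@v3 R), (@f3 R); split.
- by move=> i; cases3 i; rewrite /v3 /=; lra.
- by move=> i j; cases3 i; cases3 j; rewrite /v3 //= => _; lra.
- by move=> i; cases3 i; rewrite /f3 /=; lra.
- by rewrite sum3 /f3 /=; lra.
move=> m gamma S hZ hmaj.
have h1 := hmaj _ _ _ (@scheme1 R) (1/5) ltac:(lra) ltac:(lra).
have h2 := hmaj _ _ _ (@scheme2 R) 1 ltac:(lra) ltac:(lra).
move: h1 h2; rewrite /surplus_steps !steps3.
have [a0 a1 a2] := @cZ1 R; have [b0 b1 b2] := @cZ2 R.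
rewrite a0 a1 a2 b0 b1 b2.
have [cE A0 A1 A2 Ab] := @bound_any R m gamma S hZ.
rewrite !cE A0 /f3 /= mul0r.
have [B1 _] := @pfB R (16/19) (11/10) ltac:(lra) ltac:(lra).
have [_ B2] := @pfB R (16/19) (11/10) ltac:(lra) ltac:(lra).
rewrite (B2 ltac:(lra)) (@pfA R (5/19) (399/80) ltac:(lra) ltac:(lra)).
move: Ab; rewrite A0 /f3 /= => Ab.
move: (Aq R m gamma S i1) (Aq R m gamma S i2) A1 A2 Ab => a b A1 A2 Ab.
have ha0 : 0 <= a / (19/100) by apply: divr_ge0; lra.
have hb0 : 0 <= b / (4/5) by apply: divr_ge0; lra.
have [P1 _] := @pfB R _ _ ha0 hb0.
rewrite (@pfA R (a / (19/100)) (b/(4/5)) ha0 hb0).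
have e1 : a / (19/100) * (19/100) = a by lra.
have e2 : b / (4/5) * (4/5) = b by lra.
rewrite e1 e2 in P1 *.
move: (Pf _ (1/5)) P1 => P P1.
move=> h1 h2.
have [hal|hal] := lerP alpha 0.
  have : alpha * (a + b) <= 0 by apply: mulr_le0_ge0; lra.
  lra.
have k1 : 0 <= alpha * (a - P) by apply: mulr_ge0; lra.
have k2 : 0 <= alpha * (539/100 - 28 * a - b) by apply: mulr_ge0; lra.
nra.
Qed.
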